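(* Let $M(C,\bar\xi,\pi)$ be a Myller configuration with Darboux frame $(\bar\xi,\bar\mu,\bar v)$ and invariants $G,K,T$, $(T,K)\neq(0,0)$ everywhere, and suppose $C$ is a $\bar v$-helix with fixed unit axis $\bar d_v$ and constant angle $\omega$, $\langle\bar v,\bar d_v\rangle=\cos\omega$. Then, for one choice of sign, $$\bar d_v=\mp\sin\omega\frac{T}{\sqrt{T^2+K^2}}\bar\xi\pm\sin\omega\frac{K}{\sqrt{T^2+K^2}}\bar\mu+(\cos\omega)\bar v.$$
   Context: Let $C$ be a smooth curve in $E^3$ parametrized by arclength $s$; primes denote $d/ds$. A Myller configuration $M(C,\bar\xi,\pi)$ consists of a smooth unit vector field $\bar\xi$ along $C$ and a smooth oriented plane field $\pi$ with $\bar\xi\in\pi$; $\bar v$ is the unit normal of $\pi$, $\bar\mu=\bar v\times\bar\xi$, and $\bar\xi'=G\bar\mu+K\bar v$, $\bar\mu'=-G\bar\xi+T\bar v$, $\bar v'=-K\bar\xi-T\bar\mu$. $C$ is a $\bar v$-helix if there are a constant unit vector $\bar d_v$ (axis) and a constant $\omega$ with $\langle\bar v,\bar d_v\rangle=\cos\omega$ along $C$. *)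

(* Defs.v *)
From Stdlib Require Import Reals.
From Coquelicot Require Import Coquelicot.
Open Scope R_scope.

Record vec3 := V3 { vx : R; vy : R; vz : R }.

Definition vadd (u w : vec3) : vec3 := V3 (vx u + vx w) (vy u + vy w) (vz u + vz w).
Definition vscale (c : R) (u : vec3) : vec3 := V3 (c * vx u) (c * vy u) (c * vz u).
Definition dot (u w : vec3) : R := vx u * vx w + vy u * vy w + vz u * vz w.
Definition cross (u w : vec3) : vec3 :=
  V3 (vy u * vz w - vz u * vy w) (vz u * vx w - vx u * vz w) (vx u * vy w - vy u * vx w).
Definition is_unit (u : vec3) : Prop := dot u u = 1.

Definition vderive (f : R -> vec3) (s : R) (f' : vec3) : Prop :=
  is_derive (fun t => vx (f t)) s (vx f') /\
  is_derive (fun t => vy (f t)) s (vy f') /\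
  is_derive (fun t => vz (f t)) s (vz f').

(* Darboux frame (xi, mu, v) of a Myller configuration M(C, xi, pi) along a
   curve parametrized by arclength s in the open interval (a,b), with
   invariants G, K, T (taken continuous, as they are smooth in the paper). *)
Definition Myller_frame (a b : R) (xi mu v : R -> vec3) (G K T : R -> R) : Prop :=
  forall s, a < s < b ->
    is_unit (xi s) /\ is_unit (v s) /\ dot (v s) (xi s) = 0 /\
    mu s = cross (v s) (xi s) /\
    vderive xi s (vadd (vscale (G s) (mu s)) (vscale (K s) (v s))) /\
    vderive mu s (vadd (vscale (- G s) (xi s)) (vscale (T s) (v s))) /\
    vderive v s (vadd (vscale (- K s) (xi s)) (vscale (- T s) (mu s))) /\
    continuous G s /\ continuous K s /\ continuous T s.

Definition is_v_helix (a b : R) (v : R -> vec3) (d : vec3) (omega : R) : Prop :=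
  is_unit d /\ forall s, a < s < b -> dot (v s) d = cos omega.

(* Main.v *)
Require Import Defs.
From Stdlib Require Import Reals Lra Psatz.
From Coquelicot Require Import Coquelicot.
Open Scope R_scope.

Lemma decomp (x w d : vec3) :
  is_unit x -> is_unit w -> dot w x = 0 ->
  d = vadd (vscale (dot x d) x)
        (vadd (vscale (dot (cross w x) d) (cross w x)) (vscale (dot w d) w)).
Proof.
  destruct x as [x1 x2 x3], w as [w1 w2 w3], d as [d1 d2 d3].
  unfold is_unit, dot, cross, vadd, vscale; simpl. intros Hx Hw Hwx.
  set (m1 := w2 * x3 - w3 * x2). set (m2 := w3 * x1 - w1 * x3).
  set (m3 := w1 * x2 - w2 * x1).
  set (A := x1 * d1 + x2 * d2 + x3 * d3).
  set (B := m1 * d1 + m2 * d2 + m3 * d3).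
  set (C := w1 * d1 + w2 * d2 + w3 * d3).
  set (r1 := d1 - (A * x1 + (B * m1 + C * w1))).
  set (r2 := d2 - (A * x2 + (B * m2 + C * w2))).
  set (r3 := d3 - (A * x3 + (B * m3 + C * w3))).
  assert (Hmm : m1*m1+m2*m2+m3*m3 = 1).
  { unfold m1, m2, m3.
    replace ((w2 * x3 - w3 * x2) * (w2 * x3 - w3 * x2) +
     (w3 * x1 - w1 * x3) * (w3 * x1 - w1 * x3) +
     (w1 * x2 - w2 * x1) * (w1 * x2 - w2 * x1)) with
     ((w1*w1+w2*w2+w3*w3)*(x1*x1+x2*x2+x3*x3) - (w1*x1+w2*x2+w3*x3)^2) by ring.
    rewrite Hx, Hw, Hwx. ring. }
  assert (Hmx : m1*x1+m2*x2+m3*x3 = 0) by (unfold m1,m2,m3; ring).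
  assert (Hmw : m1*w1+m2*w2+m3*w3 = 0) by (unfold m1,m2,m3; ring).
  assert (Hrx : r1*x1+r2*x2+r3*x3 = 0).
  { unfold r1,r2,r3,A,B,C.
    transitivity ((x1*d1+x2*d2+x3*d3) * (1 - (x1*x1+x2*x2+x3*x3))
      - (m1*d1+m2*d2+m3*d3)*(m1*x1+m2*x2+m3*x3) - (w1*d1+w2*d2+w3*d3)*(w1*x1+w2*x2+w3*x3)).
    ring. rewrite Hmx, Hwx, Hx. ring. }
  assert (Hrw : r1*w1+r2*w2+r3*w3 = 0).
  { unfold r1,r2,r3,A,B,C.
    transitivity ((w1*d1+w2*d2+w3*d3) * (1 - (w1*w1+w2*w2+w3*w3))
      - (m1*d1+m2*d2+m3*d3)*(m1*w1+m2*w2+m3*w3) - (x1*d1+x2*d2+x3*d3)*(w1*x1+w2*x2+w3*x3)).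
    ring. rewrite Hmw, Hwx, Hw. ring. }
  assert (Hrm : r1*m1+r2*m2+r3*m3 = 0).
  { unfold r1,r2,r3,A,B,C.
    transitivity ((m1*d1+m2*d2+m3*d3) * (1 - (m1*m1+m2*m2+m3*m3))
      - (x1*d1+x2*d2+x3*d3)*(m1*x1+m2*x2+m3*x3) - (w1*d1+w2*d2+w3*d3)*(m1*w1+m2*w2+m3*w3)).
    ring. rewrite Hmw, Hmx, Hmm. ring. }
  (* Gram determinant identity *)
  assert (Hg : (r1*m1+r2*m2+r3*m3)^2 =
     (r1*r1+r2*r2+r3*r3)*((w1*w1+w2*w2+w3*w3)*(x1*x1+x2*x2+x3*x3) - (w1*x1+w2*x2+w3*x3)^2)
     - (w1*w1+w2*w2+w3*w3)*(r1*x1+r2*x2+r3*x3)^2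
     - (x1*x1+x2*x2+x3*x3)*(r1*w1+r2*w2+r3*w3)^2
     + 2*(w1*x1+w2*x2+w3*x3)*(r1*x1+r2*x2+r3*x3)*(r1*w1+r2*w2+r3*w3)).
  { unfold m1,m2,m3. ring. }
  rewrite Hrm, Hrx, Hrw, Hx, Hw, Hwx in Hg.
  assert (Hr : r1*r1+r2*r2+r3*r3 = 0) by lra.
  assert (r1 = 0) by nra. assert (r2 = 0) by nra. assert (r3 = 0) by nra.
  f_equal; [unfold r1 in *|unfold r2 in *|unfold r3 in *]; lra.
Qed.

Lemma loc_int (a b s : R) : a < s < b -> locally s (fun t => a < t < b).
Proof.
  intros [H1 H2].
  assert (Hp : 0 < Rmin (s - a) (b - s)) by (apply Rmin_glb_lt; lra).
  exists (mkposreal _ Hp). intros y Hy.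
  change (Rabs (y - s) < Rmin (s - a) (b - s)) in Hy.
  pose proof (Rmin_l (s - a) (b - s)). pose proof (Rmin_r (s - a) (b - s)).
  apply Rabs_def2 in Hy. lra.
Qed.

Lemma pointwise a b xi mu v G K T d omega s :
  Myller_frame a b xi mu v G K T -> is_v_helix a b v d omega -> a < s < b ->
  d = vadd (vscale (dot (xi s) d) (xi s))
        (vadd (vscale (dot (mu s) d) (mu s)) (vscale (cos omega) (v s))) /\
  (dot (xi s) d)^2 + (dot (mu s) d)^2 = (sin omega)^2 /\
  K s * dot (xi s) d + T s * dot (mu s) d = 0.
Proof.
  intros HM [Hd Hh] Hs.
  destruct (HM s Hs) as (Hxi & Hv & Hvx & Hmu & Dxi & Dmu & Dv & _).
  pose proof (decomp (xi s) (v s) d Hxi Hv Hvx) as Hdec.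
  rewrite <- Hmu in Hdec. rewrite (Hh s Hs) in Hdec.
  split; [exact Hdec|]. split.
  - assert (E : dot d d = (dot (xi s) d)^2 + (dot (mu s) d)^2 + (cos omega)^2).
    { transitivity (dot d (vadd (vscale (dot (xi s) d) (xi s))
        (vadd (vscale (dot (mu s) d) (mu s)) (vscale (cos omega) (v s))))).
      f_equal; exact Hdec.
      rewrite <- (Hh s Hs). unfold dot, vadd, vscale; simpl. ring. }
    unfold is_unit in Hd. rewrite Hd in E. pose proof (sin2_cos2 omega).
    unfold Rsqr in *. nra.
  - set (v' := vadd (vscale (- K s) (xi s)) (vscale (- T s) (mu s))) in Dv.
    destruct Dv as (D1 & D2 & D3).
    assert (Hf : is_derive (fun t => dot (v t) d) s
                  (vx v' * vx d + vy v' * vy d + vz v' * vz d)).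
    { unfold dot.
      apply (is_derive_plus (fun t => vx (v t) * vx d + vy (v t) * vy d)
               (fun t => vz (v t) * vz d)).
      apply (is_derive_plus (fun t => vx (v t) * vx d) (fun t => vy (v t) * vy d)).
      exact (is_derive_scal_l _ _ _ (vx d) D1).
      exact (is_derive_scal_l _ _ _ (vy d) D2).
      exact (is_derive_scal_l _ _ _ (vz d) D3). }
    assert (Hc : is_derive (fun _ => cos omega) s
                  (vx v' * vx d + vy v' * vy d + vz v' * vz d)).
    { apply (is_derive_ext_loc (fun t => dot (v t) d)); [|exact Hf].
      generalize (loc_int a b s Hs). apply filter_imp. intros t Ht. apply Hh; exact Ht. }
    apply is_derive_unique in Hc.
    pose proof (is_derive_unique _ _ _ (is_derive_const (cos omega) s)) as Hz.
    rewrite Hc in Hz. unfold v', vadd, vscale, dot in *; simpl in *.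
    change (@zero R_NormedModule) with 0 in Hz. lra.
Qed.

Lemma der_cont (g : R -> R) s l : is_derive g s l -> continuous g s.
Proof.
  intro H. apply is_derive_Reals in H.
  apply continuity_pt_filterlim. apply derivable_continuous_pt. exists l; exact H.
Qed.

Lemma cont_dot (f : R -> vec3) f' (d : vec3) s :
  vderive f s f' -> continuous (fun t => dot (f t) d) s.
Proof.
  intros (D1 & D2 & D3). unfold dot.
  apply (continuous_plus (fun t => vx (f t) * vx d + vy (f t) * vy d) (fun t => vz (f t) * vz d)).
  apply (continuous_plus (fun t => vx (f t) * vx d) (fun t => vy (f t) * vy d)).
  apply (continuous_mult (fun t => vx (f t)) (fun _ => vx d)).
  exact (der_cont _ _ _ D1). apply continuous_const.
  apply (continuous_mult (fun t => vy (f t)) (fun _ => vy d)).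
  exact (der_cont _ _ _ D2). apply continuous_const.
  apply (continuous_mult (fun t => vz (f t)) (fun _ => vz d)).
  exact (der_cont _ _ _ D3). apply continuous_const.
Qed.

Definition lam (xi mu : R -> vec3) (K T : R -> R) (d : vec3) (t : R) : R :=
  (dot (mu t) d * K t - dot (xi t) d * T t) * / sqrt (T t * T t + K t * K t).

Lemma cont_lam a b xi mu v G K T d s :
  Myller_frame a b xi mu v G K T ->
  (forall s, a < s < b -> T s <> 0 \/ K s <> 0) -> a < s < b ->
  continuity_pt (lam xi mu K T d) s.
Proof.
  intros HM HTK Hs.
  destruct (HM s Hs) as (_ & _ & _ & _ & Dxi & Dmu & _ & _ & cK & cT).
  apply continuity_pt_filterlim. unfold lam.
  apply (continuous_mult (fun t => dot (mu t) d * K t - dot (xi t) d * T t)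
          (fun t => / sqrt (T t * T t + K t * K t))).
  - apply (continuous_minus (fun t => dot (mu t) d * K t) (fun t => dot (xi t) d * T t)).
    + apply (continuous_mult (fun t => dot (mu t) d) K). eapply cont_dot; exact Dmu. exact cK.
    + apply (continuous_mult (fun t => dot (xi t) d) T). eapply cont_dot; exact Dxi. exact cT.
  - apply (continuous_Rinv_comp (fun t => sqrt (T t * T t + K t * K t))).
    apply continuous_sqrt_comp.
    apply (continuous_plus (fun t => T t * T t) (fun t => K t * K t)).
    apply (continuous_mult T T); exact cT.
    apply (continuous_mult K K); exact cK.
    intro H. apply sqrt_eq_0 in H; [|nra]. destruct (HTK s Hs); nra.
Qed.

Lemma no_sign_change f x y c :
  (forall t, x <= t <= y -> continuity_pt f t) ->
  (forall t, x <= t <= y -> f t ^ 2 = c ^ 2) -> c <> 0 -> x <= y -> f x = f y.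
Proof.
  intros Hc Hsq Hc0 Hxy.
  destruct (Req_dec x y) as [->|Hne]; [reflexivity|].
  assert (Hlt : x < y) by lra.
  assert (Ex : f x = c \/ f x = - c).
  { pose proof (Hsq x ltac:(lra)). assert ((f x - c) * (f x + c) = 0) by nra.
    apply Rmult_integral in H0; lra. }
  assert (Ey : f y = c \/ f y = - c).
  { pose proof (Hsq y ltac:(lra)). assert ((f y - c) * (f y + c) = 0) by nra.
    apply Rmult_integral in H0; lra. }
  destruct (Req_dec (f x) (f y)) as [E|E]; [exact E|exfalso].
  assert (Hop : f x = - f y) by lra.
  destruct (Rlt_or_le (f x) 0) as [Hn|Hp].
  - destruct (Ranalysis5.IVT_interv f x y Hc Hlt Hn ltac:(lra)) as [z [Hz Hfz]].
    pose proof (Hsq z Hz). rewrite Hfz in H. apply Hc0. nra.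
  - assert (Hpos : 0 < f x) by (destruct Ex; subst; lra).
    destruct (Ranalysis5.IVT_interv (- f)%F x y
                (fun t Ht => continuity_pt_opp f t (Hc t Ht)) Hlt) as [z [Hz Hfz]].
    unfold opp_fct; lra. unfold opp_fct; lra.
    unfold opp_fct in Hfz.
    pose proof (Hsq z Hz). assert (f z = 0) by lra. rewrite H0 in H. apply Hc0. nra.
Qed.

Lemma lam_facts a b xi mu v G K T d omega s :
  Myller_frame a b xi mu v G K T ->
  (forall s, a < s < b -> T s <> 0 \/ K s <> 0) ->
  is_v_helix a b v d omega -> a < s < b ->
  lam xi mu K T d s ^ 2 = sin omega ^ 2 /\
  dot (xi s) d = - lam xi mu K T d s * T s / sqrt (T s ^ 2 + K s ^ 2) /\
  dot (mu s) d = lam xi mu K T d s * K s / sqrt (T s ^ 2 + K s ^ 2).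
Proof.
  intros HM HTK Hh Hs.
  destruct (pointwise a b xi mu v G K T d omega s HM Hh Hs) as (_ & Hsq & Hlin).
  unfold lam.
  set (A := dot (xi s) d) in *. set (B := dot (mu s) d) in *.
  set (TT := T s) in *. set (KK := K s) in *.
  assert (Hpos : 0 < TT * TT + KK * KK) by (unfold TT, KK; destruct (HTK s Hs) as [H0|H0]; pose proof (Rsqr_pos_lt _ H0); unfold Rsqr in *; nra).
  replace (TT ^ 2 + KK ^ 2) with (TT * TT + KK * KK) by ring.
  set (n := sqrt (TT * TT + KK * KK)).
  assert (Hn : n * n = TT * TT + KK * KK) by (apply sqrt_sqrt; lra).
  assert (Hn0 : 0 < n) by (apply sqrt_lt_R0; lra).
  split; [|split].
  - replace (((B * KK - A * TT) * / n) ^ 2) with ((B * KK - A * TT) ^ 2 / (n * n))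
      by (field; lra).
    rewrite Hn. rewrite <- Hsq. field_simplify_eq; [|lra].
    assert (Hq : (KK*A+TT*B)^2 = 0) by (rewrite Hlin; ring). ring_simplify in Hq. lra.
  - replace (- ((B * KK - A * TT) * / n) * TT / n) with
      (- ((B * KK - A * TT) * TT) / (n * n)) by (field; lra).
    rewrite Hn. field_simplify_eq; [|lra].
    assert (Hq : KK*(KK*A+TT*B)=0) by (rewrite Hlin; ring). ring_simplify in Hq. lra.
  - replace ((B * KK - A * TT) * / n * KK / n) with
      (((B * KK - A * TT) * KK) / (n * n)) by (field; lra).
    rewrite Hn. field_simplify_eq; [|lra].
    assert (Hq : TT*(KK*A+TT*B)=0) by (rewrite Hlin; ring). ring_simplify in Hq. lra.
Qed.

Lemma finish a b xi mu v G K T d omega s eps :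
  Myller_frame a b xi mu v G K T ->
  (forall s, a < s < b -> T s <> 0 \/ K s <> 0) ->
  is_v_helix a b v d omega -> a < s < b ->
  lam xi mu K T d s = eps * sin omega ->
  d = vadd (vscale (- eps * sin omega * T s / sqrt (T s ^ 2 + K s ^ 2)) (xi s))
          (vadd (vscale (eps * sin omega * K s / sqrt (T s ^ 2 + K s ^ 2)) (mu s))
                (vscale (cos omega) (v s))).
Proof.
  intros HM HTK Hh Hs Hl.
  destruct (pointwise a b xi mu v G K T d omega s HM Hh Hs) as (Hdec & _ & _).
  destruct (lam_facts a b xi mu v G K T d omega s HM HTK Hh Hs) as (_ & HA & HB).
  rewrite Hdec at 1. rewrite HA, HB, Hl.
  repeat f_equal; unfold Rdiv; ring.
Qed.

Lemma sq_pm x c : x ^ 2 = c ^ 2 -> x = c \/ x = - c.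
Proof.
  intro H. assert ((x - c) * (x + c) = 0) by nra.
  apply Rmult_integral in H0; lra.
Qed.

Theorem corollary25 (a b : R) (xi mu v : R -> vec3) (G K T : R -> R)
  (d : vec3) (omega : R) :
  a < b ->
  Myller_frame a b xi mu v G K T ->
  (forall s, a < s < b -> T s <> 0 \/ K s <> 0) ->
  is_v_helix a b v d omega ->
  exists eps : R, (eps = 1 \/ eps = -1) /\
    forall s, a < s < b ->
      d = vadd (vscale (- eps * sin omega * T s / sqrt (T s ^ 2 + K s ^ 2)) (xi s))
          (vadd (vscale (eps * sin omega * K s / sqrt (T s ^ 2 + K s ^ 2)) (mu s))
                (vscale (cos omega) (v s))).
Proof.
  intros Hab HM HTK Hh.
  destruct (Req_dec (sin omega) 0) as [Hs0|Hs0].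
  - exists 1. split; [left; reflexivity|]. intros s Hs.
    apply (finish a b xi mu v G K T d omega s 1 HM HTK Hh Hs).
    destruct (lam_facts a b xi mu v G K T d omega s HM HTK Hh Hs) as (Hsq & _ & _).
    rewrite Hs0 in *. destruct (sq_pm _ _ Hsq); lra.
  - set (s0 := (a + b) / 2).
    assert (Hs0i : a < s0 < b) by (unfold s0; lra).
    set (l0 := lam xi mu K T d s0).
    exists (l0 / sin omega). split.
    + destruct (lam_facts a b xi mu v G K T d omega s0 HM HTK Hh Hs0i) as (Hsq & _ & _).
      destruct (sq_pm _ _ Hsq) as [E|E]; fold l0 in E; rewrite E;
        [left|right]; field; exact Hs0.
    + intros s Hs.
      apply (finish a b xi mu v G K T d omega s _ HM HTK Hh Hs).
      assert (Heq : lam xi mu K T d s = l0).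
      { assert (Hgen : forall x y, a < x -> x <= y -> y < b ->
                 lam xi mu K T d x = lam xi mu K T d y).
        { intros x y Hx Hxy Hy. apply (no_sign_change _ x y (sin omega)); auto.
          - intros t Ht. apply (cont_lam a b xi mu v G K T d t HM HTK). lra.
          - intros t Ht.
            destruct (lam_facts a b xi mu v G K T d omega t HM HTK Hh ltac:(lra)) as (Hsq & _ & _).
            exact Hsq. }
        unfold l0. destruct (Rle_dec s s0).
        apply Hgen; lra. symmetry; apply Hgen; lra. }
      rewrite Heq. field. exact Hs0.
Qed.
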